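(* Let $\gamma\in(\tfrac12,1]$ and $\varepsilon,\beta>0$. Then there exists a constant $c_2(\varepsilon,\beta,\gamma)$ such that for all $\xi_1\in\mathbb C$ and $\xi_2\in\mathbb R$ with $0\le\operatorname{Im}\xi_1\le1$, $|\xi_1|\ge\varepsilon$, $|\xi_2|\ge\varepsilon$, $|\operatorname{Re}\xi_1-\xi_2|\le\beta\operatorname{Im}\xi_1$, and for every $x\ge0$, $$\Big|e^{i\xi_1x}\int_0^x\frac{e^{-i\xi_1t}-e^{-i\xi_2t}}{(t+1)^\gamma}dt\Big|<\frac{c_2(\varepsilon,\beta,\gamma)}{(x+1)^\gamma}.$$ *)

(* Defs.v *)
From Stdlib Require Import Reals.
From Coquelicot Require Import Coquelicot.
Open Scope R_scope.

Definition Cexp (z : C) : C :=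
  (exp (Re z) * cos (Im z), exp (Re z) * sin (Im z)).

Definition CRInt (f : R -> C) (a b : R) : C :=
  (RInt (fun t => Re (f t)) a b, RInt (fun t => Im (f t)) a b).

(* Main.v *)
Require Import Defs.
From Stdlib Require Import Reals Lra.
From Coquelicot Require Import Coquelicot.
Open Scope R_scope.

Lemma is_derive_C (f g : R -> R) (x df dg : R) :
  is_derive f x df -> is_derive g x dg ->
  is_derive (V:=C_R_NormedModule) (fun t => (f t, g t) : C) x ((df, dg) : C).
Proof.
intros Hf Hg.
unfold is_derive in *.
pose proof (filterdiff_comp'_2 (K:=R_AbsRing) (T:=R_NormedModule) (U:=R_NormedModule) (V:=R_NormedModule) (W:=C_R_NormedModule) f g (fun u v => (u,v)) x _ _ (fun u v => (u,v)) Hf Hg) as H.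
eapply filterdiff_ext_lin. apply H.
- eapply filterdiff_ext. 2: eapply filterdiff_ext_lin. 2: apply filterdiff_id.
  intros [u v]; reflexivity. intros [u v]; reflexivity.
- intros y. reflexivity.
Qed.

Lemma is_derive_cexp (c z : C) (t : R) :
  is_derive (V:=C_R_NormedModule) (fun s => Cmult c (Cexp (Cmult z (RtoC s)))) t
    (Cmult (Cmult c z) (Cexp (Cmult z (RtoC t)))).
Proof.
destruct c as [c1 c2], z as [z1 z2].
eapply is_derive_ext.
{ intro s. symmetry. apply surjective_pairing. }
replace (Cmult (Cmult (c1, c2) (z1, z2)) (Cexp (Cmult (z1, z2) (RtoC t))))
  with ((fst (Cmult (Cmult (c1, c2) (z1, z2)) (Cexp (Cmult (z1, z2) (RtoC t)))),
         snd (Cmult (Cmult (c1, c2) (z1, z2)) (Cexp (Cmult (z1, z2) (RtoC t))))) : C)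
  by (symmetry; apply surjective_pairing).
apply is_derive_C; unfold Cexp, Cmult, RtoC, Re, Im; simpl;
 auto_derive; auto.
all: unfold Rminus; ring.
Qed.

Lemma normC (x : C) : @norm R_AbsRing C_R_NormedModule x = Cmod x.
Proof. symmetry; apply Cmod_norm. Qed.

Lemma exp_le (a b : R) : a <= b -> exp a <= exp b.
Proof. intros [H|H]; [left; apply exp_increasing; auto | subst; lra]. Qed.

Lemma scal_C (r : R) (v : C) : @scal _ C_R_NormedModule r v = Cmult (RtoC r) v.
Proof. destruct v as [v1 v2]. unfold Cmult, RtoC; simpl.
change (@scal _ C_R_NormedModule r (v1, v2)) with ((r * v1, r * v2) : C).
apply (f_equal2 (@pair R R)); ring. Qed.

Lemma minus_C (u v : C) : @minus C_R_NormedModule u v = Cminus u v.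
Proof. reflexivity. Qed.

Lemma Cexp_add (a b : C) : Cexp (Cplus a b) = Cmult (Cexp a) (Cexp b).
Proof. destruct a as [a1 a2], b as [b1 b2]. unfold Cexp, Cmult, Cplus; simpl.
rewrite exp_plus, cos_plus, sin_plus. apply (f_equal2 (@pair R R)); ring. Qed.

Lemma Cmod_Cexp (a : C) : Cmod (Cexp a) = exp (Re a).
Proof. destruct a as [a1 a2]. cbv [Cmod Cexp Re Im fst snd].
replace ((exp a1 * cos a2) ^ 2 + (exp a1 * sin a2) ^ 2) with (exp a1 ^ 2).
apply sqrt_pow2. left; apply exp_pos.
pose proof (sin2_cos2 a2). unfold Rsqr in H. nra. Qed.

Lemma Cexp_0 : Cexp (RtoC 0) = RtoC 1.
Proof. unfold Cexp, RtoC; simpl. rewrite exp_0, cos_0, sin_0. apply (f_equal2 (@pair R R)); ring. Qed.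

Lemma cont_cexp (c z : C) (t : R) :
  continuous (U:=C_R_NormedModule) (fun s => Cmult c (Cexp (Cmult z (RtoC s)))) t.
Proof. apply (ex_derive_continuous (V:=C_R_NormedModule)). eexists. apply is_derive_cexp. Qed.

Lemma Cmod_1_minus_Cexp (w : C) : Re w <= 0 -> Cmod (Cminus (RtoC 1) (Cexp w)) <= Cmod w.
Proof.
intros Hw.
assert (H : is_RInt (V:=C_R_NormedModule) (fun s => Cmult (Cmult (RtoC 1) w) (Cexp (Cmult w (RtoC s)))) 0 1
   (minus (Cmult (RtoC 1) (Cexp (Cmult w (RtoC 1)))) (Cmult (RtoC 1) (Cexp (Cmult w (RtoC 0)))))).
{ apply (is_RInt_derive (V:=C_R_CompleteNormedModule) (fun s => Cmult (RtoC 1) (Cexp (Cmult w (RtoC s))))).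
  - intros s _. apply is_derive_cexp.
  - intros s _. apply cont_cexp. }
assert (Hn : @norm R_AbsRing C_R_NormedModule (@minus C_R_NormedModule (Cmult (RtoC 1) (Cexp (Cmult w (RtoC 1)))) (Cmult (RtoC 1) (Cexp (Cmult w (RtoC 0))))) <= @scal R_Ring R_ModuleSpace (1 - 0) (Cmod w)).
{ apply (norm_RInt_le (V:=C_R_NormedModule) (fun s => Cmult (Cmult (RtoC 1) w) (Cexp (Cmult w (RtoC s)))) (fun _ => Cmod w) 0 1); [lra| | |].
  - intros s Hs. rewrite <- Cmod_norm. rewrite !Cmod_mult, Cmod_Cexp, Cmod_1.
    assert (Re (Cmult w (RtoC s)) <= 0).
    { destruct w as [w1 w2]. simpl in *. nra. }
    assert (exp (Re (Cmult w (RtoC s))) <= 1).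
    { rewrite <- exp_0. apply exp_le. lra. }
    pose proof (Cmod_ge_0 w). nra.
  - exact H.
  - apply (is_RInt_const (V:=R_NormedModule)). }
rewrite normC in Hn.
unfold scal in Hn; simpl in Hn. unfold mult in Hn; simpl in Hn.
replace (Cminus (RtoC 1) (Cexp w)) with (Copp (@minus C_R_NormedModule (Cmult (RtoC 1) (Cexp (Cmult w (RtoC 1)))) (Cmult (RtoC 1) (Cexp (Cmult w (RtoC 0)))))).
+ rewrite Cmod_opp. replace (Cmod w) with ((1 - 0) * Cmod w) by ring. exact Hn.
+ rewrite minus_C. replace (Cmult w (RtoC 0)) with (RtoC 0) by ring. rewrite Cexp_0.
  replace (Cmult w (RtoC 1)) with w by ring. ring.
Qed.

Definition P (s t : R) := Rpower (t + 1) s.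

Lemma P_pos s t : 0 < P s t.
Proof. unfold P, Rpower. apply exp_pos. Qed.

Lemma P_deriv s t : -1 < t -> is_derive (P s) t (s * P (s - 1) t).
Proof.
intros Ht. apply is_derive_Reals. unfold P.
replace (s * Rpower (t + 1) (s - 1)) with ((s * Rpower (t + 1) (s - 1)) * 1) by ring.
apply (derivable_pt_lim_comp (fun u => u + 1) (fun u => Rpower u s)).
- apply is_derive_Reals. auto_derive; auto; ring.
- apply derivable_pt_lim_power. lra.
Qed.

Lemma P_cont k s t : -1 < t -> continuous (fun u => k * P s u) t.
Proof.
intros Ht. apply (ex_derive_continuous (K:=R_AbsRing) (V:=R_NormedModule)).
eexists. apply is_derive_scal. apply P_deriv. auto.
Qed.

Lemma P_minus1 s t : -1 < t -> P (s - 1) t = P s t / (t + 1).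
Proof.
intros Ht. unfold P. unfold Rminus. rewrite Rpower_plus, Rpower_Ropp, Rpower_1 by lra.
reflexivity.
Qed.

Lemma P_inv g t : / Rpower (t + 1) g = P (- g) t.
Proof. unfold P. rewrite Rpower_Ropp. reflexivity. Qed.

Lemma P_at0 s : P s 0 = 1.
Proof. unfold P. replace (0 + 1) with 1 by ring. unfold Rpower. rewrite ln_1. rewrite Rmult_0_r. apply exp_0. Qed.

Lemma P_ge g x : 0 <= x -> 0 < g <= 1 -> / (x + 1) <= P (- g) x.
Proof.
intros Hx Hg. rewrite <- P_inv. apply Rinv_le_contravar.
- unfold Rpower. apply exp_pos.
- rewrite <- (Rpower_1 (x+1)) at 2 by lra. apply Rle_Rpower; lra.
Qed.

Lemma P_le1 s t : 0 <= t -> s <= 0 -> P s t <= 1.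
Proof.
intros Ht Hs. unfold P, Rpower. apply Rle_trans with (exp 0); [apply exp_le | rewrite exp_0; lra].
assert (0 <= ln (t + 1)). { rewrite <- ln_1. destruct (Req_dec t 0). subst. replace (0+1) with 1 by ring. lra. left. apply ln_increasing; lra. }
nra.
Qed.

Lemma P_int g x : 0 < g -> 0 <= x ->
  is_RInt (P (- g - 1)) 0 x ((1 - P (- g) x) / g).
Proof.
intros Hg Hx.
cut (is_RInt (P (- g - 1)) 0 x (@minus R_NormedModule ((fun t => - P (- g) t / g) x) ((fun t => - P (-g) t / g) 0))).
{ intro H. replace ((1 - P (- g) x) / g) with (@minus R_NormedModule ((fun t => - P (- g) t / g) x) ((fun t => - P (-g) t / g) 0)). exact H.
  unfold minus, plus, opp; simpl. rewrite P_at0. field. lra. }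
apply (is_RInt_derive (V:=R_CompleteNormedModule)).
- intros t Ht. rewrite Rmin_left, Rmax_right in Ht by lra.
  replace (P (- g - 1) t) with (- (/ g) * ((- g) * P (- g - 1) t)) by (field; lra).
  apply (is_derive_ext (fun u => (- / g) * P (- g) u)). { intros u. change (@eq R (- / g * P (- g) u) (- P (- g) u / g)). field. lra. }
  apply is_derive_scal. apply P_deriv. lra.
- intros t Ht. rewrite Rmin_left, Rmax_right in Ht by lra.
  eapply continuous_ext. { intros u. apply Rmult_1_l. }
  apply P_cont. lra.
Qed.

Ltac toR := match goal with |- @eq _ ?a ?b => change (@eq R a b) end.
Ltac toC := match goal with |- @eq _ ?a ?b => change (@eq C a b) end.

Definition EE (z1 z2 : C) (t : R) : C :=
  Cminus (Cexp (Cmult z1 (RtoC t))) (Cexp (Cmult z2 (RtoC t))).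
Definition K1 (z1 z2 : C) (t : R) : C :=
  Cminus (Cmult (Cinv z1) (Cexp (Cmult z1 (RtoC t)))) (Cmult (Cinv z2) (Cexp (Cmult z2 (RtoC t)))).
Definition K2 (z1 z2 : C) (t : R) : C :=
  Cminus (Cmult (Cinv (Cmult z1 z1)) (Cexp (Cmult z1 (RtoC t)))) (Cmult (Cinv (Cmult z2 z2)) (Cexp (Cmult z2 (RtoC t)))).

Lemma Cinv_sq_mul (z : C) : z <> RtoC 0 -> Cmult (Cinv (Cmult z z)) z = Cinv z.
Proof. intros H. field. auto. Qed.

Lemma K1_deriv z1 z2 t : z1 <> RtoC 0 -> z2 <> RtoC 0 ->
  is_derive (V:=C_R_NormedModule) (K1 z1 z2) t (EE z1 z2 t).
Proof.
intros H1 H2. unfold K1.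
replace (EE z1 z2 t) with (@minus C_R_NormedModule (Cmult (Cmult (Cinv z1) z1) (Cexp (Cmult z1 (RtoC t))))
   (Cmult (Cmult (Cinv z2) z2) (Cexp (Cmult z2 (RtoC t))))).
- apply (is_derive_minus (V:=C_R_NormedModule)); apply is_derive_cexp.
- rewrite minus_C. unfold EE. toC. rewrite !Cinv_l by auto. rewrite !Cmult_1_l. reflexivity.
Qed.

Lemma K2_deriv z1 z2 t : z1 <> RtoC 0 -> z2 <> RtoC 0 ->
  is_derive (V:=C_R_NormedModule) (K2 z1 z2) t (K1 z1 z2 t).
Proof.
intros H1 H2. unfold K2.
replace (K1 z1 z2 t) with (@minus C_R_NormedModule (Cmult (Cmult (Cinv (Cmult z1 z1)) z1) (Cexp (Cmult z1 (RtoC t))))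
   (Cmult (Cmult (Cinv (Cmult z2 z2)) z2) (Cexp (Cmult z2 (RtoC t))))).
- apply (is_derive_minus (V:=C_R_NormedModule)); apply is_derive_cexp.
- rewrite minus_C. unfold K1. toC. rewrite !Cinv_sq_mul by auto. reflexivity.
Qed.

Lemma EE_cont z1 z2 t : continuous (U:=C_R_NormedModule) (EE z1 z2) t.
Proof.
unfold EE. apply (continuous_ext (fun s => @minus C_R_NormedModule (Cmult (RtoC 1) (Cexp (Cmult z1 (RtoC s)))) (Cmult (RtoC 1) (Cexp (Cmult z2 (RtoC s)))))).
{ intros s. rewrite minus_C. toC. rewrite !Cmult_1_l. reflexivity. }
apply (continuous_minus (V:=C_R_NormedModule)); apply cont_cexp.
Qed.

Lemma K_cont z1 z2 t : z1 <> RtoC 0 -> z2 <> RtoC 0 -> continuous (U:=C_R_NormedModule) (K1 z1 z2) t.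
Proof. intros. apply (ex_derive_continuous (V:=C_R_NormedModule)). eexists. apply K1_deriv; auto. Qed.

Lemma K2_cont z1 z2 t : z1 <> RtoC 0 -> z2 <> RtoC 0 -> continuous (U:=C_R_NormedModule) (K2 z1 z2) t.
Proof. intros. apply (ex_derive_continuous (V:=C_R_NormedModule)). eexists. apply K2_deriv; auto. Qed.

Lemma ibp z1 z2 g x : z1 <> RtoC 0 -> z2 <> RtoC 0 -> 0 <= x ->
 is_RInt (V:=C_R_CompleteNormedModule) (fun t => scal (P (-g) t) (EE z1 z2 t)) 0 x
   (minus (minus (scal (P (-g) x) (K1 z1 z2 x)) (scal (P (-g) 0) (K1 z1 z2 0)))
     (minus (minus (scal (-g * P (-g-1) x) (K2 z1 z2 x)) (scal (-g * P (-g-1) 0) (K2 z1 z2 0)))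
        (RInt (V:=C_R_CompleteNormedModule) (fun t => scal (-g * ((-g-1) * P (-g-1-1) t)) (K2 z1 z2 t)) 0 x))).
Proof.
intros H1 H2 Hx.
assert (Hr : forall t, Rmin 0 x <= t <= Rmax 0 x -> -1 < t).
{ intros t Ht. rewrite Rmin_left in Ht by lra. lra. }
apply (is_RInt_scal_derive_r (V:=C_R_CompleteNormedModule) (P (-g)) (K1 z1 z2) (fun t => -g * P (-g-1) t) (EE z1 z2)).
- intros t Ht. apply P_deriv. auto.
- intros t Ht. apply K1_deriv; auto.
- intros t Ht. apply P_cont. auto.
- intros t Ht. apply EE_cont.
- apply (is_RInt_scal_derive_r (V:=C_R_CompleteNormedModule) (fun t => -g * P (-g-1) t) (K2 z1 z2) (fun t => -g * ((-g-1) * P (-g-1-1) t)) (K1 z1 z2)).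
  + intros t Ht. apply is_derive_scal. apply P_deriv. auto.
  + intros t Ht. apply K2_deriv; auto.
  + intros t Ht. apply (continuous_ext (fun u => (-g * (-g-1)) * P (-g-1-1) u)).
    { intros u. toR. ring. }
    apply P_cont. auto.
  + intros t Ht. apply K_cont; auto.
  + apply (RInt_correct (V:=C_R_CompleteNormedModule)).
    apply (ex_RInt_continuous (V:=C_R_CompleteNormedModule)).
    intros t Ht. apply (continuous_scal (V:=C_R_NormedModule)).
    * apply (continuous_ext (fun u => (-g * (-g-1)) * P (-g-1-1) u)).
      { intros u. toR. ring. }
      apply P_cont. auto.
    * apply K2_cont; auto.
Qed.

Lemma y_le_exp y : 0 <= y -> y <= exp (y / 2).
Proof.
intros Hy. replace (y / 2) with (y / 4 + y / 4) by field. rewrite exp_plus.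
pose proof (exp_ineq1_le (y / 4)).
assert (H2 : (1 + y/4)*(1+y/4) <= exp(y/4)*exp(y/4)) by (apply Rmult_le_compat; lra).
assert (y <= (1 + y/4)*(1+y/4)) by (pose proof (Rle_0_sqr (1 - y/4)); unfold Rsqr in *; nra).
lra.
Qed.

Lemma bexp b x : 0 <= b <= 1 -> 0 <= x -> b * exp (- (b * x) / 2) * (x + 1) <= 2.
Proof.
intros Hb Hx. pose proof (y_le_exp (b * x) ltac:(nra)).
assert (E : exp (- (b * x) / 2) * exp (b * x / 2) = 1).
{ rewrite <- exp_plus. replace (- (b * x) / 2 + b * x / 2) with 0 by field. apply exp_0. }
assert (1 <= exp (b * x / 2)). { pose proof (exp_ineq1_le (b * x / 2)). nra. }
pose proof (exp_pos (- (b * x) / 2)). nra.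
Qed.

Lemma Cmod_inv_le z eps : 0 < eps -> eps <= Cmod z -> Cmod (Cinv z) <= / eps.
Proof.
intros He Hz. assert (z <> RtoC 0). { intro H; subst. rewrite Cmod_0 in Hz. lra. }
rewrite Cmod_inv by auto. apply Rinv_le_contravar; lra.
Qed.

Lemma Cmod_diff2 (c p1 p2 e1 e2 : C) :
  Cmod (Cmult c (Cminus (Cmult p1 e1) (Cmult p2 e2))) <= Cmod p1 * Cmod (Cmult c e1) + Cmod p2 * Cmod (Cmult c e2).
Proof.
replace (Cmult c (Cminus (Cmult p1 e1) (Cmult p2 e2))) with (Cplus (Cmult p1 (Cmult c e1)) (Copp (Cmult p2 (Cmult c e2)))) by ring.
eapply Rle_trans. apply Cmod_triangle. rewrite Cmod_opp, !Cmod_mult. lra.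
Qed.

Lemma Cinv_sq z : z <> RtoC 0 -> Cinv (Cmult z z) = Cmult (Cinv z) (Cinv z).
Proof. intros. field. auto. Qed.

Lemma Cmod_sq_inv z M : z <> RtoC 0 -> Cmod (Cinv z) <= M -> Cmod (Cinv (Cmult z z)) <= M * M.
Proof. intros H HM. rewrite Cinv_sq, Cmod_mult by auto. pose proof (Cmod_ge_0 (Cinv z)). nra. Qed.

Lemma inv_diff_id z1 z2 : z1 <> RtoC 0 -> z2 <> RtoC 0 ->
  Cminus (Cinv (Cmult z1 z1)) (Cinv (Cmult z2 z2)) = Cmult (Cmult (Cminus z2 z1) (Cmult (Cinv z1) (Cinv z2))) (Cplus (Cinv z1) (Cinv z2)).
Proof. intros. field. auto. Qed.

Lemma inv_diff_id1 z1 z2 : z1 <> RtoC 0 -> z2 <> RtoC 0 ->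
  Cminus (Cinv z1) (Cinv z2) = Cmult (Cminus z2 z1) (Cmult (Cinv z1) (Cinv z2)).
Proof. intros. field. auto. Qed.

Lemma Cmod_diff_inv z1 z2 M D : z1 <> RtoC 0 -> z2 <> RtoC 0 ->
  Cmod (Cinv z1) <= M -> Cmod (Cinv z2) <= M -> Cmod (Cminus z2 z1) <= D ->
  Cmod (Cminus (Cinv z1) (Cinv z2)) <= D * (M * M).
Proof.
intros H1 H2 HM1 HM2 HD. rewrite inv_diff_id1 by auto. rewrite !Cmod_mult.
pose proof (Cmod_ge_0 (Cinv z1)). pose proof (Cmod_ge_0 (Cinv z2)). pose proof (Cmod_ge_0 (Cminus z2 z1)).
apply Rmult_le_compat; try nra.
Qed.

Lemma Cmod_diff_inv2 z1 z2 M D : z1 <> RtoC 0 -> z2 <> RtoC 0 ->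
  Cmod (Cinv z1) <= M -> Cmod (Cinv z2) <= M -> Cmod (Cminus z2 z1) <= D ->
  Cmod (Cminus (Cinv (Cmult z1 z1)) (Cinv (Cmult z2 z2))) <= D * (M * M) * (2 * M).
Proof.
intros H1 H2 HM1 HM2 HD. rewrite inv_diff_id by auto.
rewrite Cmod_mult, <- inv_diff_id1 by auto.
pose proof (Cmod_diff_inv z1 z2 M D H1 H2 HM1 HM2 HD).
assert (Cmod (Cplus (Cinv z1) (Cinv z2)) <= 2 * M).
{ eapply Rle_trans. apply Cmod_triangle. lra. }
apply Rmult_le_compat; auto using Cmod_ge_0.
Qed.

Lemma K2_bound (z1 z2 c : C) (M b x t D : R) :
 z1 <> RtoC 0 -> z2 <> RtoC 0 ->
 Cmod (Cinv z1) <= M -> Cmod (Cinv z2) <= M ->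
 Cmod (Cmult c (Cexp (Cmult z1 (RtoC t)))) = exp (b * t - b * x) ->
 Cmod (Cmult c (Cexp (Cmult z2 (RtoC t)))) = exp (- (b * x)) ->
 Re (Cmult (Cminus z2 z1) (RtoC t)) <= 0 -> Cmod (Cminus z2 z1) <= D ->
 0 <= b -> 0 <= t <= x ->
 Cmod (Cmult c (K2 z1 z2 t)) <= 2 * (M * M) /\
 (2 * t <= x -> Cmod (Cmult c (K2 z1 z2 t)) <= exp (- (b * x) / 2) * (D * (M * M)) * (2 * M + t)).
Proof.
intros H1 H2 HM1 HM2 E1 E2 Hre HD Hb Ht.
pose proof (Cmod_sq_inv z1 M H1 HM1). pose proof (Cmod_sq_inv z2 M H2 HM2).
assert (HMp : 0 <= M) by (pose proof (Cmod_ge_0 (Cinv z1)); lra).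
assert (Hx1 : exp (b * t - b * x) <= 1) by (rewrite <- exp_0; apply exp_le; nra).
assert (Hx2 : exp (- (b * x)) <= 1) by (rewrite <- exp_0; apply exp_le; nra).
split.
- unfold K2. eapply Rle_trans. apply Cmod_diff2. rewrite E1, E2.
  pose proof (exp_pos (b * t - b * x)). pose proof (exp_pos (- (b * x))).
  pose proof (Cmod_ge_0 (Cinv (Cmult z1 z1))). pose proof (Cmod_ge_0 (Cinv (Cmult z2 z2))).
  nra.
- intros H2t.
  assert (Hsplit : Cexp (Cmult z2 (RtoC t)) = Cmult (Cexp (Cmult z1 (RtoC t))) (Cexp (Cmult (Cminus z2 z1) (RtoC t)))).
  { rewrite <- Cexp_add. f_equal. ring. }
  assert (Hid : Cmult c (K2 z1 z2 t) = Cmult (Cmult c (Cexp (Cmult z1 (RtoC t))))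
             (Cplus (Cminus (Cinv (Cmult z1 z1)) (Cinv (Cmult z2 z2)))
                    (Cmult (Cinv (Cmult z2 z2)) (Cminus (RtoC 1) (Cexp (Cmult (Cminus z2 z1) (RtoC t))))))).
  { unfold K2. rewrite Hsplit. ring. }
  rewrite Hid, Cmod_mult, E1.
  pose proof (Cmod_diff_inv2 z1 z2 M D H1 H2 HM1 HM2 HD).
  pose proof (Cmod_1_minus_Cexp _ Hre) as Hc.
  rewrite Cmod_mult, Cmod_R, Rabs_pos_eq in Hc by lra.
  assert (Hq : Cmod (Cmult (Cinv (Cmult z2 z2)) (Cminus (RtoC 1) (Cexp (Cmult (Cminus z2 z1) (RtoC t))))) <= M * M * (D * t)).
  { rewrite Cmod_mult. apply Rmult_le_compat; auto using Cmod_ge_0. eapply Rle_trans. apply Hc.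
    apply Rmult_le_compat_r; lra. }
  assert (Hs : Cmod (Cplus (Cminus (Cinv (Cmult z1 z1)) (Cinv (Cmult z2 z2)))
                    (Cmult (Cinv (Cmult z2 z2)) (Cminus (RtoC 1) (Cexp (Cmult (Cminus z2 z1) (RtoC t)))))) <= D * (M * M) * (2 * M + t)).
  { eapply Rle_trans. apply Cmod_triangle. nra. }
  assert (Hx3 : exp (b * t - b * x) <= exp (- (b * x) / 2)) by (apply exp_le; nra).
  rewrite Rmult_assoc. apply Rmult_le_compat; auto using Cmod_ge_0. left; apply exp_pos.
Qed.

Lemma K1_bound (z1 z2 c : C) (M b x t : R) :
 Cmod (Cinv z1) <= M -> Cmod (Cinv z2) <= M ->
 Cmod (Cmult c (Cexp (Cmult z1 (RtoC t)))) = exp (b * t - b * x) ->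
 Cmod (Cmult c (Cexp (Cmult z2 (RtoC t)))) = exp (- (b * x)) ->
 0 <= b -> 0 <= t <= x ->
 Cmod (Cmult c (K1 z1 z2 t)) <= 2 * M.
Proof.
intros HM1 HM2 E1 E2 Hb Ht.
assert (Hx1 : exp (b * t - b * x) <= 1) by (rewrite <- exp_0; apply exp_le; nra).
assert (Hx2 : exp (- (b * x)) <= 1) by (rewrite <- exp_0; apply exp_le; nra).
unfold K1. eapply Rle_trans. apply Cmod_diff2. rewrite E1, E2.
pose proof (exp_pos (b * t - b * x)). pose proof (exp_pos (- (b * x))).
pose proof (Cmod_ge_0 (Cinv z1)). pose proof (Cmod_ge_0 (Cinv z2)).
nra.
Qed.

Lemma Z0_bound z1 z2 M D g : z1 <> RtoC 0 -> z2 <> RtoC 0 ->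
  Cmod (Cinv z1) <= M -> Cmod (Cinv z2) <= M -> Cmod (Cminus z2 z1) <= D -> 0 <= g <= 1 ->
  Cmod (Cplus (K1 z1 z2 0) (Cmult (RtoC g) (K2 z1 z2 0))) <= D * (M * M) * (1 + 2 * M).
Proof.
intros H1 H2 HM1 HM2 HD Hg.
unfold K1, K2. replace (Cmult z1 (RtoC 0)) with (RtoC 0) by ring.
replace (Cmult z2 (RtoC 0)) with (RtoC 0) by ring. rewrite Cexp_0.
replace (Cplus (Cminus (Cmult (Cinv z1) (RtoC 1)) (Cmult (Cinv z2) (RtoC 1)))
   (Cmult (RtoC g) (Cminus (Cmult (Cinv (Cmult z1 z1)) (RtoC 1)) (Cmult (Cinv (Cmult z2 z2)) (RtoC 1)))))
 with (Cplus (Cminus (Cinv z1) (Cinv z2)) (Cmult (RtoC g) (Cminus (Cinv (Cmult z1 z1)) (Cinv (Cmult z2 z2))))) by ring.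
eapply Rle_trans. apply Cmod_triangle. rewrite Cmod_mult, Cmod_R, Rabs_pos_eq by lra.
pose proof (Cmod_diff_inv z1 z2 M D H1 H2 HM1 HM2 HD).
pose proof (Cmod_diff_inv2 z1 z2 M D H1 H2 HM1 HM2 HD).
pose proof (Cmod_ge_0 (Cminus (Cinv (Cmult z1 z1)) (Cinv (Cmult z2 z2)))).
assert (0 <= D * (M * M) * (2 * M)).
{ pose proof (Cmod_ge_0 (Cminus (Cinv (Cmult z1 z1)) (Cinv (Cmult z2 z2)))). lra. }
nra.
Qed.

Lemma L_ex z1 z2 g x : z1 <> RtoC 0 -> z2 <> RtoC 0 -> 0 <= x ->
  ex_RInt (V:=C_R_CompleteNormedModule) (fun t => scal (-g * ((-g-1) * P (-g-1-1) t)) (K2 z1 z2 t)) 0 x.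
Proof.
intros H1 H2 Hx.
apply (ex_RInt_continuous (V:=C_R_CompleteNormedModule)).
intros t Ht. rewrite Rmin_left in Ht by lra.
apply (continuous_scal (V:=C_R_NormedModule)).
* apply (continuous_ext (fun u => (-g * (-g-1)) * P (-g-1-1) u)).
  { intros u. toR. ring. }
  apply P_cont. lra.
* apply K2_cont; auto.
Qed.

Lemma minus_C' (u v : C) : @minus C_R_CompleteNormedModule u v = Cminus u v.
Proof. reflexivity. Qed.

Lemma minus_C'' (u v : C) : @minus (ModuleSpace.AbelianGroup R_Ring
   (prod_ModuleSpace R_Ring R_ModuleSpace R_ModuleSpace)) u v = Cminus u v.
Proof. reflexivity. Qed.

Lemma RtoC_neg1 g : RtoC (- g * 1) = Copp (RtoC g).
Proof. unfold RtoC, Copp; simpl. apply (f_equal2 (@pair R R)); ring. Qed.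

Lemma Cmod_Ci : Cmod Ci = 1.
Proof. unfold Cmod, Ci; simpl. replace (0 * (0 * 1) + 1 * (1 * 1)) with 1 by ring. apply sqrt_1. Qed.

Theorem lemma3p3 (gamma eps beta : R) :
  1/2 < gamma <= 1 -> 0 < eps -> 0 < beta ->
  exists c2 : R,
    forall (xi1 : C) (xi2 : R),
      0 <= Im xi1 <= 1 ->
      eps <= Cmod xi1 ->
      eps <= Rabs xi2 ->
      Rabs (Re xi1 - xi2) <= beta * Im xi1 ->
      forall x : R, 0 <= x ->
        Cmod (Cmult (Cexp (Cmult Ci (Cmult xi1 (RtoC x))))
               (CRInt (fun t =>
                  Cmult (Cminus (Cexp (Copp (Cmult Ci (Cmult xi1 (RtoC t)))))
                                (Cexp (Copp (Cmult Ci (RtoC (xi2 * t))))))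
                        (RtoC (/ Rpower (t + 1) gamma))) 0 x))
        < c2 / Rpower (x + 1) gamma.
Proof.
intros Hg He Hb.
set (M := / eps).
assert (HM : 0 < M) by (apply Rinv_0_lt_compat; lra).
set (B := 8 * M * M + 4 * (beta + 1) * (M * M) * (2 * M + 1)).
exists (2 * M + 2 * M * M + 2 * ((beta + 1) * (M * M) * (1 + 2 * M)) + 2 * B + 1).
intros xi1 xi2 Hb1 Hm1 Hm2 Hd x Hx.
set (z1 := Copp (Cmult Ci xi1)).
set (z2 := Copp (Cmult Ci (RtoC xi2))).
assert (Hz1 : Cmod z1 = Cmod xi1).
{ unfold z1. rewrite Cmod_opp, Cmod_mult. rewrite Cmod_Ci. ring. }
assert (Hz2 : Cmod z2 = Rabs xi2).
{ unfold z2. rewrite Cmod_opp, Cmod_mult, Cmod_R. rewrite Cmod_Ci. ring. }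
assert (Hn1 : z1 <> RtoC 0). { intro H. rewrite H, Cmod_0 in Hz1. lra. }
assert (Hn2 : z2 <> RtoC 0). { intro H. rewrite H, Cmod_0 in Hz2. lra. }
pose proof (ibp z1 z2 gamma x Hn1 Hn2 Hx) as Hi.
set (v := minus _ _) in Hi.
assert (Hf : forall t, Cmult (Cminus (Cexp (Copp (Cmult Ci (Cmult xi1 (RtoC t)))))
                                (Cexp (Copp (Cmult Ci (RtoC (xi2 * t))))))
                        (RtoC (/ Rpower (t + 1) gamma)) = @scal _ C_R_NormedModule (P (-gamma) t) (EE z1 z2 t)).
{ intros t. rewrite scal_C, P_inv. unfold EE, z1, z2.
  replace (Copp (Cmult Ci (Cmult xi1 (RtoC t)))) with (Cmult (Copp (Cmult Ci xi1)) (RtoC t)) by ring.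
  replace (Copp (Cmult Ci (RtoC (xi2 * t)))) with (Cmult (Copp (Cmult Ci (RtoC xi2))) (RtoC t)) by (rewrite RtoC_mult; ring).
  ring. }
assert (HCR : CRInt (fun t =>
                  Cmult (Cminus (Cexp (Copp (Cmult Ci (Cmult xi1 (RtoC t)))))
                                (Cexp (Copp (Cmult Ci (RtoC (xi2 * t))))))
                        (RtoC (/ Rpower (t + 1) gamma))) 0 x = v).
{ apply (is_RInt_ext (V:=C_R_NormedModule) _ (fun t => Cmult (Cminus (Cexp (Copp (Cmult Ci (Cmult xi1 (RtoC t)))))
                                (Cexp (Copp (Cmult Ci (RtoC (xi2 * t))))))
                        (RtoC (/ Rpower (t + 1) gamma)))) in Hi.
  2: { intros t _. symmetry. apply Hf. }
  unfold CRInt. rewrite (surjective_pairing v).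
  f_equal.
  - apply (is_RInt_unique (V:=R_CompleteNormedModule)). apply (is_RInt_fct_extend_fst _ _ _ _ Hi).
  - apply (is_RInt_unique (V:=R_CompleteNormedModule)). apply (is_RInt_fct_extend_snd _ _ _ _ Hi). }
rewrite HCR. clear HCR Hf Hi.
destruct xi1 as [a b]. simpl in Hb1, Hd.
set (c := Cexp (Cmult Ci (Cmult (a, b) (RtoC x)))).
assert (Ec : Cmod c = exp (- (b * x))).
{ unfold c. rewrite Cmod_Cexp. f_equal. simpl. ring. }
assert (E1 : forall t, Cmod (Cmult c (Cexp (Cmult z1 (RtoC t)))) = exp (b * t - b * x)).
{ intros t. rewrite Cmod_mult, Ec, Cmod_Cexp, <- exp_plus. f_equal. unfold z1; simpl; ring. }
assert (E2 : forall t, Cmod (Cmult c (Cexp (Cmult z2 (RtoC t)))) = exp (- (b * x))).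
{ intros t. rewrite Cmod_mult, Ec, Cmod_Cexp. replace (Re (Cmult z2 (RtoC t))) with 0 by (unfold z2; simpl; ring).
  rewrite exp_0; ring. }
assert (Hre : forall t, 0 <= t -> Re (Cmult (Cminus z2 z1) (RtoC t)) <= 0).
{ intros t Ht. unfold z1, z2; simpl. nra. }
set (D := (beta + 1) * b).
assert (HD : Cmod (Cminus z2 z1) <= D).
{ replace (Cminus z2 z1) with ((-b, a - xi2) : C).
  2: { unfold z1, z2, Cminus, Cplus, Copp, Cmult, Ci, RtoC; simpl. apply (f_equal2 (@pair R R)); ring. }
  cbv [Cmod fst snd].
  assert (H0 : 0 <= D) by (unfold D; nra).
  rewrite <- (sqrt_pow2 D H0). apply sqrt_le_1_alt.
  pose proof (Rle_abs (a - xi2)). pose proof (Rle_abs (- (a - xi2))). rewrite Rabs_Ropp in *. unfold D. nra. }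
assert (HM1 : Cmod (Cinv z1) <= M). { apply Cmod_inv_le; lra. }
assert (HM2 : Cmod (Cinv z2) <= M). { apply Cmod_inv_le; lra. }
set (W := P (- gamma) x).
assert (HW : 0 < W) by apply P_pos.
assert (HWx : / (x + 1) <= W) by (apply P_ge; lra).
assert (Hbw : b * exp (- (b * x) / 2) <= 2 * W).
{ pose proof (bexp b x ltac:(lra) Hx).
  assert (Hi : 0 < / (x + 1)) by (apply Rinv_0_lt_compat; lra).
  replace (b * exp (- (b * x) / 2)) with (b * exp (- (b * x) / 2) * (x + 1) * / (x + 1)) by (field; lra).
  nra. }
assert (Hee : exp (- (b * x)) <= exp (- (b * x) / 2)) by (apply exp_le; nra).
assert (Hbw' : b * exp (- (b * x)) <= 2 * W).
{ pose proof (exp_pos (- (b * x))). nra. }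
set (L := RInt (V:=C_R_CompleteNormedModule) (fun t => scal (-gamma * ((-gamma-1) * P (-gamma-1-1) t)) (K2 z1 z2 t)) 0 x).
assert (Hv : v = Cplus (Cminus (Cmult (RtoC W) (K1 z1 z2 x)) (Cmult (RtoC (-gamma * P (-gamma-1) x)) (K2 z1 z2 x)))
       (Cplus (Copp (Cplus (K1 z1 z2 0) (Cmult (RtoC gamma) (K2 z1 z2 0)))) L)).
{ unfold v, L, W. rewrite ?minus_C, ?minus_C', ?minus_C''. repeat change (minus ?u ?w) with (Cminus u w). rewrite !scal_C, !P_at0, RtoC_neg1. toC. ring. }
rewrite Hv. clear Hv.
set (Z0 := Cplus (K1 z1 z2 0) (Cmult (RtoC gamma) (K2 z1 z2 0))).
set (w1x := - gamma * P (- gamma - 1) x).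
replace (Cmult c (Cplus (Cminus (Cmult (RtoC W) (K1 z1 z2 x)) (Cmult (RtoC w1x) (K2 z1 z2 x))) (Cplus (Copp Z0) L)))
  with (Cplus (Cplus (Cmult (RtoC W) (Cmult c (K1 z1 z2 x))) (Copp (Cmult (RtoC w1x) (Cmult c (K2 z1 z2 x)))))
              (Cplus (Copp (Cmult c Z0)) (Cmult c L))) by ring.
assert (F1 : Cmod (Cmult (RtoC W) (Cmult c (K1 z1 z2 x))) <= W * (2 * M)).
{ rewrite Cmod_mult, Cmod_R, Rabs_pos_eq by lra. apply Rmult_le_compat_l. lra.
  apply (K1_bound z1 z2 c M b x x); auto; lra. }
assert (F2 : Cmod (Cmult (RtoC w1x) (Cmult c (K2 z1 z2 x))) <= W * (2 * (M * M))).
{ rewrite Cmod_mult, Cmod_R.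
  assert (Hw1 : Rabs w1x <= W).
  { unfold w1x. rewrite P_minus1 by lra. fold W.
    rewrite Rabs_left1.
    2: { assert (0 < W / (x + 1)) by (apply Rdiv_lt_0_compat; lra). nra. }
    assert (W / (x + 1) <= W).
    { unfold Rdiv. pose proof (Rinv_le_contravar 1 (x + 1) ltac:(lra) ltac:(lra)). rewrite Rinv_1 in H. nra. }
    assert (0 < W / (x + 1)) by (apply Rdiv_lt_0_compat; lra). nra. }
  apply Rmult_le_compat; auto using Rabs_pos, Cmod_ge_0.
  apply (K2_bound z1 z2 c M b x x D); auto; lra. }
assert (F3 : Cmod (Cmult c Z0) <= W * (2 * ((beta + 1) * (M * M) * (1 + 2 * M)))).
{ rewrite Cmod_mult, Ec.
  pose proof (Z0_bound z1 z2 M D gamma Hn1 Hn2 HM1 HM2 HD ltac:(lra)) as HZ. fold Z0 in HZ.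
  apply Rle_trans with (exp (- (b * x)) * (D * (M * M) * (1 + 2 * M))).
  apply Rmult_le_compat_l; [left; apply exp_pos | exact HZ].
  unfold D. assert (0 <= M * M * (1 + 2 * M)) by nra.
  assert (0 <= beta + 1) by lra.
  replace (exp (- (b * x)) * ((beta + 1) * b * (M * M) * (1 + 2 * M))) with ((b * exp (- (b * x))) * ((beta + 1) * (M * M) * (1 + 2 * M))) by ring.
  replace (W * (2 * ((beta + 1) * (M * M) * (1 + 2 * M)))) with ((2 * W) * ((beta + 1) * (M * M) * (1 + 2 * M))) by ring.
  apply Rmult_le_compat_r; nra. }
assert (F4 : Cmod (Cmult c L) <= W * (2 * B)).
{ set (e := exp (- (b * x))).
  assert (He0 : 0 < e) by apply exp_pos.
  assert (HB0 : 0 <= B) by (unfold B; apply Rplus_le_le_0_compat; repeat apply Rmult_le_pos; lra).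
  assert (HL : Cmod L <= (B * W / e) * ((1 - P (- gamma) x) / gamma)).
  { rewrite <- normC.
    apply (norm_RInt_le (V:=C_R_NormedModule) (fun t => scal (-gamma * ((-gamma-1) * P (-gamma-1-1) t)) (K2 z1 z2 t))
             (fun t => (B * W / e) * P (- gamma - 1) t) 0 x).
    - lra.
    - intros t Ht.
      eapply Rle_trans. apply (norm_scal (K:=R_AbsRing) (V:=C_R_NormedModule)). rewrite normC.
      change (abs (- gamma * ((- gamma - 1) * P (- gamma - 1 - 1) t))) with (Rabs (- gamma * ((- gamma - 1) * P (- gamma - 1 - 1) t))).
      rewrite P_minus1 by lra.
      set (Q := P (- gamma - 1) t).
      assert (HQ : 0 < Q) by apply P_pos.
      set (CK := Cmod (K2 z1 z2 t)).
      assert (HCK : 0 <= CK) by apply Cmod_ge_0.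
      assert (Hck : Cmod (Cmult c (K2 z1 z2 t)) = e * CK) by (unfold CK; rewrite Cmod_mult, Ec; reflexivity).
      destruct (K2_bound z1 z2 c M b x t D Hn1 Hn2 HM1 HM2 (E1 t) (E2 t) (Hre t ltac:(lra)) HD ltac:(lra) Ht) as [K21 K22].
      rewrite Hck in K21, K22.
      assert (Key : 2 * (e * CK) <= B * W * (t + 1)).
      { destruct (Rle_lt_dec (2 * t) x) as [H2t | H2t].
        - specialize (K22 H2t).
          assert (Hb2 : exp (- (b * x) / 2) * D <= (beta + 1) * (2 * W)).
          { unfold D. replace (exp (- (b * x) / 2) * ((beta + 1) * b)) with ((beta + 1) * (b * exp (- (b * x) / 2))) by ring.
            apply Rmult_le_compat_l; lra. }
          assert (HMM : 0 <= M * M) by nra.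
          apply Rle_trans with (2 * ((exp (- (b * x) / 2) * D) * (M * M) * (2 * M + t))).
          { replace (2 * ((exp (- (b * x) / 2) * D) * (M * M) * (2 * M + t))) with (2 * (exp (- (b * x) / 2) * (D * (M * M)) * (2 * M + t))) by ring. lra. }
          apply Rle_trans with (2 * (((beta + 1) * (2 * W)) * (M * M) * (2 * M + t))).
          { apply Rmult_le_compat_l. lra. apply Rmult_le_compat_r. lra. apply Rmult_le_compat_r. lra. exact Hb2. }
          unfold B.
          assert (0 <= (beta + 1) * W * (M * M)) by (apply Rmult_le_pos; [apply Rmult_le_pos|]; lra).
          assert (2 * M + t <= (2 * M + 1) * (t + 1)) by nra.
          assert (0 <= 8 * M * M * W * (t + 1)) by (apply Rmult_le_pos; [apply Rmult_le_pos|]; nra).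
          nra.
        - assert (W * (t + 1) >= / 2).
          { assert (/ (x + 1) * (t + 1) >= / 2).
            { apply Rle_ge. apply (Rmult_le_reg_l (2 * (x + 1))). lra.
              replace (2 * (x + 1) * (/ (x + 1) * (t + 1))) with (2 * (t + 1)) by (field; lra). lra. }
            nra. }
          unfold B. assert (0 <= 4 * (beta + 1) * (M * M) * (2 * M + 1) * W * (t + 1)).
          { repeat apply Rmult_le_pos; nra. }
          nra. }
      rewrite Rabs_pos_eq.
      2: { assert (0 < Q / (t + 1)) by (apply Rdiv_lt_0_compat; lra). nra. }
      apply Rle_trans with (Q / (e * (t + 1)) * (2 * (e * CK))).
      { assert (0 < Q / (t + 1)) by (apply Rdiv_lt_0_compat; lra).
        replace (Q / (e * (t + 1)) * (2 * (e * CK))) with (2 * (Q / (t + 1)) * CK) by (field; lra).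
        apply Rmult_le_compat_r. lra.
        replace (- gamma * ((- gamma - 1) * (Q / (t + 1)))) with ((gamma * (gamma + 1)) * (Q / (t + 1))) by ring.
        apply Rmult_le_compat_r. lra. nra. }
      replace (B * W / e * Q) with (Q / (e * (t + 1)) * (B * W * (t + 1))) by (field; lra).
      apply Rmult_le_compat_l. apply Rlt_le, Rdiv_lt_0_compat; nra. exact Key.
    - apply (RInt_correct (V:=C_R_CompleteNormedModule)). apply L_ex; auto.
    - apply (is_RInt_ext (V:=R_NormedModule) (fun t => scal (B * W / e) (P (- gamma - 1) t))).
      { intros t _. reflexivity. }
      apply (is_RInt_scal (V:=R_NormedModule)). apply P_int; lra. }
  rewrite Cmod_mult, Ec. fold e.
  apply Rle_trans with (e * ((B * W / e) * ((1 - P (- gamma) x) / gamma))).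
  { apply Rmult_le_compat_l; lra. }
  replace (e * ((B * W / e) * ((1 - P (- gamma) x) / gamma))) with ((B * W) * ((1 - W) / gamma)) by (unfold W; field; lra).
  assert ((1 - W) / gamma <= 2).
  { apply (Rmult_le_reg_l gamma). lra. replace (gamma * ((1 - W) / gamma)) with (1 - W) by (field; lra). lra. }
  assert (0 <= B * W) by nra. nra. }
apply Rle_lt_trans with (W * (2 * M) + W * (2 * (M * M)) + W * (2 * ((beta + 1) * (M * M) * (1 + 2 * M))) + W * (2 * B)).
- eapply Rle_trans. apply Cmod_triangle.
  pose proof (Cmod_triangle (Cmult (RtoC W) (Cmult c (K1 z1 z2 x))) (Copp (Cmult (RtoC w1x) (Cmult c (K2 z1 z2 x))))).
  pose proof (Cmod_triangle (Copp (Cmult c Z0)) (Cmult c L)).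
  rewrite Cmod_opp in *. lra.
- unfold Rdiv. rewrite P_inv. fold W. nra.
Qed.
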